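(* If $\beta$ is a real quadratic irrational of conductor $f$, then there exist an integer matrix $B$ with $\det B=f$ and a real quadratic irrational $\alpha$ of conductor $1$ such that $\beta=B\cdot\alpha$.
   Context: For an integer matrix $B=\begin{pmatrix}a&b\\c&d\end{pmatrix}$, $B\cdot\alpha=\frac{a\alpha+b}{c\alpha+d}$. If $\beta$ is a root of $a\beta^2+b\beta+c=0$ with $a,b,c\in\mathbb Z$, $\gcd(a,b,c)=1$, and $b^2-4ac=f^2\Delta_0$ with $\Delta_0$ a fundamental discriminant and $f$ a positive integer, then $f$ is the conductor of $\beta$. *)

(* Defs.v *)
From HB Require Import structures.
From mathcomp Require Import all_boot all_order all_algebra.
From mathcomp Require Import reals.
Set Implicit Arguments. Unset Strict Implicit. Unset Printing Implicit Defensive.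
Import Order.TTheory GRing.Theory Num.Theory.
Local Open Scope ring_scope.

(* An integer is squarefree if no square of a prime divides it
   (so 0 is not squarefree). *)
Definition int_squarefree (D : int) : Prop :=
  forall p : nat, prime p -> ~ (((p ^ 2)%N%:Z %| D)%Z).

Definition fundamental_disc (D : int) : Prop :=
  (D <> 1 /\ (D %% 4)%Z = 1 /\ int_squarefree D) \/
  (exists m : int, D = 4 * m /\ ((m %% 4)%Z = 2 \/ (m %% 4)%Z = 3)
                   /\ int_squarefree m).

Definition has_conductor (R : realType) (x : R) (f : nat) : Prop :=
  (0 < f)%N /\
  exists a b c : int,
    gcdz (gcdz a b) c = 1 /\
    a%:~R * x ^+ 2 + b%:~R * x + c%:~R = 0 /\
    exists D0 : int, fundamental_disc D0 /\ b ^+ 2 - 4 * a * c = (f ^ 2)%N%:Z * D0.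

Definition mob_den (R : realType) (B : 'M[int]_2) (x : R) : R :=
  (B 1 0)%:~R * x + (B 1 1)%:~R.
Definition mob_act (R : realType) (B : 'M[int]_2) (x : R) : R :=
  ((B 0 0)%:~R * x + (B 0 1)%:~R) / mob_den B x.

(* Main.v *)
Require Import Defs.
From HB Require Import structures.
From mathcomp Require Import all_boot all_order all_algebra.
From mathcomp Require Import reals.
From mathcomp Require Import zify ring lra.
Import Order.TTheory GRing.Theory Num.Theory.
Local Open Scope ring_scope.

Definition qv (a b c x y : int) := a*x*x + b*x*y + c*y*y.
Definition bv (a b c m00 m01 m10 m11 : int) :=
  2*a* m00* m01 + b*(m00* m11+m01* m10) + 2*c* m10* m11.
Definition disc4 (E : int) := exists k, E = 4*k \/ E = 4*k+1.
Definition prim (a b c : int) := gcdz (gcdz a b) c = 1.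

Lemma primP a b c :
  (forall d, (d %| a)%Z -> (d %| b)%Z -> (d %| c)%Z -> (d %| 1)%Z) -> prim a b c.
Proof.
move=> H; rewrite /prim.
have := H (gcdz (gcdz a b) c).
rewrite dvdz_gcdr (dvdz_trans (dvdz_gcdl _ _) (dvdz_gcdl _ _))
        (dvdz_trans (dvdz_gcdl _ _) (dvdz_gcdr _ _)).
move=> /(_ isT isT isT); rewrite /gcdz /dvdz unfold_in /= dvdn1 => /eqP -> //.
Qed.

Lemma primD a b c d : prim a b c ->
  (d %| a)%Z -> (d %| b)%Z -> (d %| c)%Z -> (d %| 1)%Z.
Proof. rewrite /prim => h ha hb hc. have : (d %| gcdz (gcdz a b) c)%Z by rewrite !dvdz_gcd ha hb hc. by rewrite h. Qed.

Lemma sq4 (x : int) : exists s, x * x = 4 * s \/ x * x = 4 * s + 1.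
Proof.
have [t [->|->]] : exists t, x = 2*t \/ x = 2*t+1 by exists (x %/ 2)%Z; lia.
- by exists (t*t); left; ring.
- by exists (t*t + t); right; ring.
Qed.

Lemma disc4_sq (x E : int) : disc4 E -> disc4 (x ^+ 2 * E).
Proof.
move=> [k hk]; have [s hs] := sq4 x.
rewrite expr2; case: hs => ->; case: hk => ->.
- by exists (s * 4 * k); left; ring.
- by exists (s * (4*k+1)); left; ring.
- by exists ((4*s+1)*k); left; ring.
- by exists (4*s*k + s + k); right; ring.
Qed.

Lemma p_dvd_sq (p : nat) (b : int) : prime p -> (p%:Z %| b * b)%Z -> (p%:Z %| b)%Z.
Proof.
move=> pp; rewrite /dvdz !unfold_in /= abszM Euclid_dvdM //; by case/orP.
Qed.

Lemma rex (p : nat) (u b w E : int) : prime p -> ~~ (p%:Z %| u)%Z ->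
  b^+2 - 4*u*w = (p%:Z)^+2 * E -> disc4 E ->
  exists r, (p%:Z %| 2*u*r+b)%Z /\ ((p%:Z)^+2 %| u*r*r + b*r + w)%Z.
Proof.
move=> pp npu hd hE.
have cup : coprimez u p%:Z.
  by rewrite coprimezE /= coprime_sym prime_coprime.
have [p2|p2] := eqVneq p 2%N.
- subst p.
  have [b' hb'] : exists b', b = 2 * b'.
    have [t [ht|ht]] : exists t, b = 2*t \/ b = 2*t+1 by exists (b %/ 2)%Z; lia.
      by exists t.
    have : (4 * (t*t) + 4*t + 1) - 4*(u*w) = 4 * E by rewrite -hd ht; ring.
    lia.
  have [s hs] : exists s, u = 2*s+1.
    have [t [ht|ht]] : exists t, u = 2*t \/ u = 2*t+1 by exists (u %/ 2)%Z; lia.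
      by move: npu; rewrite ht dvdz_mulr.
    by exists t.
  have huw : u*w = b' * b' - E.
    have h' : 4 * (u*w - (b'*b' - E)) = -(b^+2 - 4*u*w - (2%:Z)^+2 * E) by rewrite hb'; ring.
    rewrite hd subrr oppr0 in h'. lia.
  have c4 : coprimez (2%:Z^+2) u by rewrite coprimez_pexpl // coprimez_sym.
  case: hE => k [hk|hk].
  + exists b'; split; first by apply/dvdzP; exists (u*b'+b'); rewrite hb'; ring.
    rewrite -(Gauss_dvdzr _ c4); apply/dvdzP.
    exists (((s+1)*b')^+2 - k).
    have -> : u * (u * b' * b' + b * b' + w) = (u * b' + b')^+2 - (b'*b' - u*w).
      by rewrite hb'; ring.
    rewrite huw hk hs; ring.
  + exists (b'+1); split; first by apply/dvdzP; exists (u*(b'+1)+b'); rewrite hb'; ring.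
    rewrite -(Gauss_dvdzr _ c4); apply/dvdzP.
    exists (((s+1)*b' + s)^+2 + ((s+1)*b' + s) - k).
    have -> : u * (u * (b'+1) * (b'+1) + b * (b'+1) + w) = (u * (b'+1) + b')^+2 - (b'*b' - u*w).
      by rewrite hb'; ring.
    rewrite huw hk hs; ring.
- have c2p : coprimez 2 p%:Z.
    rewrite coprimezE /= coprime_sym prime_coprime //; apply/negP => /dvdn_leq hle.
    have := prime_gt1 pp; move: p2 => /eqP; lia.
  have c2u : coprimez (2*u) (p%:Z^+2).
    by rewrite coprimez_pexpr // coprimezMl c2p cup.
  have c4u : coprimez (p%:Z^+2) (2 * (2 * u)).
    by rewrite coprimez_sym coprimezMl c2u andbT coprimez_pexpr.
  have [x [y hxy]] := Bezoutz (2*u) (p%:Z^+2).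
  move: c2u; rewrite /coprimez => /eqP g1; rewrite g1 in hxy.
  exists (- b * x).
  have e1 : 2*u*(-b*x) + b = b * y * p%:Z^+2.
    apply/eqP; rewrite -subr_eq0.
    have -> : 2*u*(-b*x) + b - b*y* p%:Z^+2 = b * (1 - (x * (2*u) + y * p%:Z^+2)) by ring.
    by rewrite hxy subrr mulr0.
  split; first by rewrite e1 expr2 mulrA dvdz_mull.
  rewrite -(Gauss_dvdzr _ c4u); apply/dvdzP.
  exists ((b * y)^+2 * p%:Z^+2 - E).
  have -> : 2 * (2 * u) * (u * (- b * x) * (- b * x) + b * (- b * x) + w)
     = (2*u*(-b*x) + b)^+2 - (b^+2 - 4*u*w) by ring.
  rewrite e1 hd; ring.
Qed.

Lemma dcomb d x y s t : (d %| x)%Z -> (d %| y)%Z -> (d %| x*s + y*t)%Z.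
Proof. move=> /dvdzP[k1 ->] /dvdzP[k2 ->]; apply/dvdzP; exists (k1*s+k2*t); ring. Qed.
Lemma dcomb3 d x y z s t u : (d %| x)%Z -> (d %| y)%Z -> (d %| z)%Z -> (d %| x*s + y*t + z*u)%Z.
Proof. move=> /dvdzP[k1 ->] /dvdzP[k2 ->] /dvdzP[k3 ->]; apply/dvdzP; exists (k1*s+k2*t+k3*u); ring. Qed.

Lemma step (p : nat) (a b c E : int) : prime p -> prim a b c ->
  b^+2 - 4*a*c = (p%:Z)^+2 * E -> disc4 E ->
  exists m00 m01 m10 m11 a' b' c' : int,
    m00 * m11 - m01 * m10 = p%:Z /\ prim a' b' c' /\ b'^+2 - 4*a'*c' = E /\
    qv a b c m00 m10 = (p%:Z)^+2 * a' /\ bv a b c m00 m01 m10 m11 = (p%:Z)^+2 * b' /\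
    qv a b c m01 m11 = (p%:Z)^+2 * c'.
Proof.
move=> pp hp hd hE.
have p0 : (p%:Z)^+2 != 0 by rewrite expf_neq0 // eqz_nat -lt0n prime_gt0.
have [pa|npa] := boolP (p%:Z %| a)%Z; last first.
  have [r [/dvdzP[q hq] /dvdzP[z hz]]] := @rex _ _ _ _ _ pp npa hd hE.
  exists p%:Z, r, 0, 1, a, q, z.
  split; first by ring.
  split.
    apply: primP => d da dq dz; apply: (@primD a b c d hp) => //.
      have -> : b = q * p%:Z + a * (- 2 * r) by rewrite -hq; ring.
      by apply: dcomb.
    have -> : c = z * p%:Z^+2 + a * (- r * r) + b * (- r) by rewrite -hz; ring.
    have db : (d %| b)%Z.
      have -> : b = q * p%:Z + a * (- 2 * r) by rewrite -hq; ring.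
      by apply: dcomb.
    by apply: dcomb3.
  split.
    apply: (mulfI p0).
    have -> : p%:Z^+2 * (q^+2 - 4*a*z) = (q * p%:Z)^+2 - 4*a*(z * p%:Z^+2) by ring.
    rewrite -hq -hz -hd; ring.
  rewrite /qv /bv; split; first by ring.
  split; last by rewrite [RHS]mulrC -hz; ring.
  have -> : 2 * a * p%:Z * r + b * (p%:Z * 1 + r * 0) + 2 * c * 0 * 1 = p%:Z * (2 * a * r + b) by ring.
  by rewrite hq; ring.
have npc : ~~ (p%:Z %| c)%Z.
  apply/negP => pc; have pb : (p%:Z %| b)%Z.
    apply: p_dvd_sq => //.
    have -> : b * b = (b^+2 - 4*a*c) + c * (4 * a) by ring.
    rewrite hd; have -> : p%:Z^+2 * E = p%:Z * (p%:Z * E) by ring.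
    by apply: dcomb => //; apply: dvdzz.
  have := @primD a b c _ hp pa pb pc; rewrite /dvdz unfold_in /= dvdn1 => /eqP p1.
  by move: (prime_gt1 pp); rewrite p1.
have hd' : b^+2 - 4*c*a = (p%:Z)^+2 * E by rewrite -hd; ring.
have [r [/dvdzP[q hq] /dvdzP[z hz]]] := @rex _ _ _ _ _ pp npc hd' hE.
exists 1, 0, r, p%:Z, z, q, c.
split; first by ring.
split.
  apply: primP => d dz dq dc; apply: (@primD a b c d hp) => //; last first.
  have db : (d %| b)%Z.
    have -> : b = q * p%:Z + c * (- 2 * r) by rewrite -hq; ring.
    by apply: dcomb.
  by [].
  have db : (d %| b)%Z.
    have -> : b = q * p%:Z + c * (- 2 * r) by rewrite -hq; ring.
    by apply: dcomb.
  have -> : a = z * p%:Z^+2 + c * (- r * r) + b * (- r) by rewrite -hz; ring.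
  by apply: dcomb3.
split.
  apply: (mulfI p0).
  have -> : p%:Z^+2 * (q^+2 - 4*z*c) = (q * p%:Z)^+2 - 4*c*(z * p%:Z^+2) by ring.
  rewrite -hq -hz -hd'; ring.
rewrite /qv /bv; split; first by rewrite [RHS]mulrC -hz; ring.
split; last by ring.
have -> : 2 * a * 1 * 0 + b * (1 * p%:Z + 0 * r) + 2 * c * r * p%:Z = p%:Z * (2 * c * r + b) by ring.
by rewrite hq; ring.
Qed.

Lemma qv_comp a b c a00 a01 a10 a11 x y :
  qv a b c (a00 * x + a01 * y) (a10 * x + a11 * y) =
  qv (qv a b c a00 a10) (bv a b c a00 a01 a10 a11) (qv a b c a01 a11) x y.
Proof. rewrite /qv /bv; ring. Qed.

Lemma bv_comp a b c a00 a01 a10 a11 n00 n01 n10 n11 :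
  bv a b c (a00 * n00 + a01 * n10) (a00 * n01 + a01 * n11)
           (a10 * n00 + a11 * n10) (a10 * n01 + a11 * n11) =
  bv (qv a b c a00 a10) (bv a b c a00 a01 a10 a11) (qv a b c a01 a11) n00 n01 n10 n11.
Proof. rewrite /qv /bv; ring. Qed.

Lemma qv_scale k a b c x y : qv (k * a) (k * b) (k * c) x y = k * qv a b c x y.
Proof. rewrite /qv; ring. Qed.
Lemma bv_scale k a b c x y z w : bv (k * a) (k * b) (k * c) x y z w = k * bv a b c x y z w.
Proof. rewrite /bv; ring. Qed.

Lemma core (f : nat) : (0 < f)%N -> forall a b c D : int, prim a b c ->
  b^+2 - 4*a*c = (f%:Z)^+2 * D -> disc4 D ->
  exists m00 m01 m10 m11 a' b' c' : int,
    m00 * m11 - m01 * m10 = f%:Z /\ prim a' b' c' /\ b'^+2 - 4*a'*c' = D /\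
    qv a b c m00 m10 = (f%:Z)^+2 * a' /\ bv a b c m00 m01 m10 m11 = (f%:Z)^+2 * b' /\
    qv a b c m01 m11 = (f%:Z)^+2 * c'.
Proof.
elim/ltn_ind: f => f IH f0 a b c D hp hd hD.
have [f1|f1] := eqVneq f 1%N.
  subst f; exists 1, 0, 0, 1, a, b, c; rewrite /qv /bv.
  split; first by ring. split => //. split; first by rewrite hd; ring.
  by split; [ring | split; ring].
have f1' : (1 < f)%N by lia.
set p := pdiv f.
have pp : prime p := pdiv_prime f1'.
have p1 : (1 < p)%N := prime_gt1 pp.
set f' := (f %/ p)%N.
have ef : (f' * p)%N = f by rewrite divnK // pdiv_dvd.
have f'lt : (f' < f)%N by apply: ltn_Pdiv.
have f'0 : (0 < f')%N by move: f0; rewrite -ef muln_gt0 => /andP[].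
have hd1 : b^+2 - 4*a*c = (p%:Z)^+2 * ((f'%:Z)^+2 * D).
  by rewrite hd -ef PoszM; ring.
have [a00 [a01 [a10 [a11 [a1 [b1 [c1 [dA [pr1 [hd2 [e1 [e2 e3]]]]]]]]]]]] :=
  @step _ _ _ _ _ pp hp hd1 (@disc4_sq _ _ hD).
have [n00 [n01 [n10 [n11 [a2 [b2 [c2 [dN [pr2 [hd3 [g1 [g2 g3]]]]]]]]]]]] :=
  IH f' f'lt f'0 a1 b1 c1 D pr1 hd2 hD.
exists (a00 * n00 + a01 * n10), (a00 * n01 + a01 * n11),
       (a10 * n00 + a11 * n10), (a10 * n01 + a11 * n11), a2, b2, c2.
have ef' : f%:Z = f'%:Z * p%:Z by rewrite -ef PoszM.
split.
  have -> : (a00 * n00 + a01 * n10) * (a10 * n01 + a11 * n11) -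
    (a00 * n01 + a01 * n11) * (a10 * n00 + a11 * n10) =
    (a00 * a11 - a01 * a10) * (n00 * n11 - n01 * n10) by ring.
  by rewrite dA dN ef' mulrC.
split => //; split => //.
split; first by rewrite qv_comp e1 e2 e3 qv_scale g1 ef'; ring.
split; first by rewrite bv_comp e1 e2 e3 bv_scale g2 ef'; ring.
by rewrite qv_comp e1 e2 e3 qv_scale g3 ef'; ring.
Qed.

Definition mk2 (m00 m01 m10 m11 : int) : 'M[int]_2 :=
  \matrix_(i < 2, j < 2)
    (if i == 0 then (if j == 0 then m00 else m01) else (if j == 0 then m10 else m11)).

Lemma det_mk2 m00 m01 m10 m11 : \det (mk2 m00 m01 m10 m11) = m00 * m11 - m01 * m10.
Proof.
rewrite (expand_det_row _ 0) !big_ord_recl big_ord0 /cofactor !det_mx11 !mxE /=.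
rewrite /bump /=; ring.
Qed.

Theorem lemma4p42 (R : realType) (beta : R) (f : nat) :
  @irrational R beta -> has_conductor beta f ->
  exists (B : 'M[int]_2) (alpha : R),
    \det B = f%:Z /\ @irrational R alpha /\ has_conductor alpha 1 /\
    mob_den B alpha != 0 /\ beta = mob_act B alpha.
Proof.
move=> irr [f0 [a [b [c [hp [hroot [D0 [hfund hd]]]]]]]].
have hD : disc4 D0.
  case: hfund => [[_ [h4 _]]|[m [-> _]]].
    by exists (D0 %/ 4)%Z; right; lia.
  by exists m; left.
have hd' : b^+2 - 4*a*c = (f%:Z)^+2 * D0 by rewrite hd -natz natrX natz.
have [m00 [m01 [m10 [m11 [a' [b' [c' [dA [pr1 [hd3 [e1 [e2 e3]]]]]]]]]]]] :=
  @core f f0 a b c D0 hp hd' hD.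
set den : R := m00%:~R - m10%:~R * beta.
have fR0 : ((f%:Z)%:~R : R) != 0 by rewrite intr_eq0 eqz_nat -lt0n.
have dR : (m00%:~R * m11%:~R - m01%:~R * m10%:~R : R) = (f%:Z)%:~R.
  by rewrite -dA; rewrite !rmorphB !rmorphM.
have den0 : den != 0.
  have [m100|m100] := eqVneq m10 0.
    rewrite /den m100 mul0r subr0 intr_eq0; apply/eqP => m000.
    have : f%:Z = 0 by rewrite -dA m000 m100; ring.
    by move/eqP; rewrite eqz_nat => /eqP; lia.
  apply/eqP => hden; apply: irr.
  exists (m00%:~R / m10%:~R) => //.
  rewrite fmorph_div /= !ratr_int.
  apply: (mulfI (_ : (m10%:~R : R) != 0)); first by rewrite intr_eq0.
  rewrite mulrC divfK ?intr_eq0 //.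
  by move/eqP: hden; rewrite subr_eq0 => /eqP ->; rewrite mulrC.
set alpha : R := (m11%:~R * beta - m01%:~R) / den.
have key : den * alpha = m11%:~R * beta - m01%:~R by rewrite mulrC divfK.
have hmden : mob_den (mk2 m00 m01 m10 m11) alpha = m10%:~R * alpha + m11%:~R.
  by rewrite /mob_den !mxE.
have hnum : (mk2 m00 m01 m10 m11) 0 0 = m00 /\ (mk2 m00 m01 m10 m11) 0 1 = m01.
  by rewrite !mxE.
set mden : R := m10%:~R * alpha + m11%:~R.
set num : R := m00%:~R * alpha + m01%:~R.
have emden : den * mden = (f%:Z)%:~R.
  have -> : den * mden = m10%:~R * (den * alpha) + m11%:~R * den by rewrite /mden; ring.
  by rewrite key -dR /den; ring.
have enum : den * num = beta * (f%:Z)%:~R.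
  have -> : den * num = m00%:~R * (den * alpha) + m01%:~R * den by rewrite /num; ring.
  by rewrite key -dR /den; ring.
have mden0 : mden != 0.
  by apply/eqP => h; move: fR0; rewrite -emden h mulr0 eqxx.
have numE : num = beta * mden.
  apply: (mulfI den0); by rewrite enum mulrA [den * beta]mulrC -mulrA emden.
have betaE : beta = num / mden by rewrite numE mulfK.
exists (mk2 m00 m01 m10 m11), alpha.
split; first by rewrite det_mk2.
split.
  move=> [q _ hq]; apply: irr.
  exists ((m00%:~R * q + m01%:~R) / (m10%:~R * q + m11%:~R)) => //.
  rewrite fmorph_div /= !rmorphD !rmorphM /= !ratr_int hq betaE.
  by [].
split.
  split => //; exists a', b', c'; split => //; split; last first.
    by exists D0; split => //; rewrite hd3 /= mul1r.
  have f20 : ((f%:Z)%:~R : R) ^+ 2 != 0 by rewrite expf_neq0.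
  apply: (mulfI f20); rewrite mulr0.
  have -> : ((f%:Z)%:~R : R) ^+ 2 * (a'%:~R * alpha ^+ 2 + b'%:~R * alpha + c'%:~R)
     = (qv a b c m00 m10)%:~R * alpha ^+ 2 + (bv a b c m00 m01 m10 m11)%:~R * alpha
       + (qv a b c m01 m11)%:~R by rewrite e1 e2 e3; ring.
  have -> : (qv a b c m00 m10)%:~R * alpha ^+ 2 + (bv a b c m00 m01 m10 m11)%:~R * alpha
       + (qv a b c m01 m11)%:~R = a%:~R * num ^+ 2 + b%:~R * num * mden + c%:~R * mden ^+ 2 :> R.
    by rewrite /qv /bv /num /mden; ring.
  rewrite numE.
  have -> : a%:~R * (beta * mden) ^+ 2 + b%:~R * (beta * mden) * mden + c%:~R * mden ^+ 2
     = mden ^+ 2 * (a%:~R * beta ^+ 2 + b%:~R * beta + c%:~R) :> R by ring.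
  by rewrite hroot mulr0.
split; first by rewrite hmden.
by rewrite /mob_act hmden !mxE /=.
Qed.
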